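(* Let $(\Re,S,V)$ be a vector $S$-metric space and let $H,K,P,Q:\Re\to\Re$ be four maps such that there is $\rho\in[0,1)$ with $$S(Hx,Hy,Kz)\preceq \rho\, U(x,y,z)\quad\text{for all } x,y,z\in\Re,$$ where $$U(x,y,z)=\max\{S(Px,Py,Qz),\ S(Px,Px,Hx),\ S(Qz,Qz,Kz),\ S(Qz,Qz,Hx)\}$$ (the maximum being the supremum in $V$), and suppose the pairs $(H,P)$ and $(K,Q)$ are occasionally weakly compatible. Then $H,K,P,Q$ have a unique common fixed point in $\Re$, i.e. there is exactly one $\xi\in\Re$ with $H\xi=K\xi=P\xi=Q\xi=\xi$.
   Context: A vector lattice (Riesz space) $V$ is an ordered real vector space whose order $\preceq$ is a lattice order; $\max$ of finitely many elements of $V$ denotes their supremum. Given a vector lattice $V$ and a nonempty set $\Re$, a vector $S$-metric is a map $S:\Re^3\to V$ such that for all $x_1,x_2,x_3,\alpha\in\Re$: (a) $S(x_1,x_2,x_3)\succeq 0$; (b) $S(x_1,x_2,x_3)=0$ iff $x_1=x_2=x_3$; (c) $S(x_1,x_2,x_3)\preceq S(x_1,x_2,\alpha)+S(x_2,x_2,\alpha)+S(x_3,x_3,\alpha)$. The triple $(\Re,S,V)$ is a vector $S$-metric space. Two maps $A,B:\Re\to\Re$ are occasionally weakly compatible if there exists a coincidence point $x\in\Re$ of $A$ and $B$ (i.e. $Ax=Bx$) such that $ABx=BAx$. *)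

(* Defs.v *)
From HB Require Import structures.
From mathcomp Require Import all_boot all_order all_algebra.
From mathcomp Require Import reals.
Set Implicit Arguments. Unset Strict Implicit. Unset Printing Implicit Defensive.
Import Order.TTheory GRing.Theory Num.Theory.
Local Open Scope ring_scope.

Record vector_lattice (R : realType) (V : lmodType R) := VectorLattice {
  vle : V -> V -> Prop;
  vjoin : V -> V -> V;
  vle_refl : forall x, vle x x;
  vle_anti : forall x y, vle x y -> vle y x -> x = y;
  vle_trans : forall x y z, vle x y -> vle y z -> vle x z;
  vle_add : forall x y z, vle x y -> vle (x + z) (y + z);
  vle_scale : forall (a : R) x y, 0 <= a -> vle x y -> vle (a *: x) (a *: y);
  vjoin_ubl : forall x y, vle x (vjoin x y);
  vjoin_ubr : forall x y, vle y (vjoin x y);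
  vjoin_lub : forall x y z, vle x z -> vle y z -> vle (vjoin x y) z
}.

Definition vmax4 (R : realType) (V : lmodType R) (L : vector_lattice V)
  (a b c d : V) : V := vjoin L (vjoin L (vjoin L a b) c) d.

Definition is_vector_Smetric (R : realType) (V : lmodType R)
  (L : vector_lattice V) (X : Type) (S : X -> X -> X -> V) : Prop :=
  (forall x1 x2 x3, vle L 0 (S x1 x2 x3)) /\
  (forall x1 x2 x3, S x1 x2 x3 = 0 <-> (x1 = x2 /\ x2 = x3)) /\
  (forall x1 x2 x3 a,
      vle L (S x1 x2 x3) (S x1 x2 a + S x2 x2 a + S x3 x3 a)).

Definition owc (X : Type) (A B : X -> X) : Prop :=
  exists x, A x = B x /\ A (B x) = B (A x).

(* Main.v *)
Require Import Defs.
From mathcomp Require Import all_boot all_order all_algebra.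
From mathcomp Require Import reals.
Import Order.TTheory GRing.Theory Num.Theory.
Local Open Scope ring_scope.
Set Implicit Arguments. Unset Strict Implicit.

Lemma le_rho_zero (R : realType) (V : lmodType R) (L : vector_lattice V)
  (rho : R) (d : V) : 0 <= rho -> rho < 1 ->
  vle L 0 d -> vle L d (rho *: d) -> d = 0.
Proof.
move=> r0 r1 d0 h.
have h1 := vle_add (- (rho *: d)) h.
rewrite subrr -{1}(scale1r d) -scalerBl in h1.
have ne : (1 - rho) != 0 by rewrite subr_eq0 eq_sym lt_eqF.
have p : 0 <= (1 - rho)^-1 by rewrite invr_ge0 subr_ge0 ltW.
have h2 := vle_scale p h1.
rewrite scalerA mulVf // scale1r scaler0 in h2.
exact: (vle_anti h2 d0).
Qed.

Lemma key (R : realType) (V : lmodType R) (L : vector_lattice V)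
  (X : Type) (S : X -> X -> X -> V) (rho : R) (a b : X) (p q r s : V) :
  is_vector_Smetric L S -> 0 <= rho -> rho < 1 ->
  vle L p (S a a b) -> vle L q (S a a b) -> vle L r (S a a b) -> vle L s (S a a b) ->
  vle L (S a a b) (rho *: vmax4 L p q r s) -> a = b.
Proof.
move=> [S0 [Seq Str]] r0 r1 hp hq hr hs h.
have hm : vle L (vmax4 L p q r s) (S a a b).
  by rewrite /vmax4; do 3! apply: vjoin_lub => //.
have := le_rho_zero r0 r1 (S0 a a b) (vle_trans h (vle_scale r0 hm)).
by move/Seq => [].
Qed.

Lemma Szero (R : realType) (V : lmodType R) (L : vector_lattice V)
  (X : Type) (S : X -> X -> X -> V) (a : X) :
  is_vector_Smetric L S -> S a a a = 0.
Proof. by move=> [_ [Seq _]]; apply/Seq. Qed.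

Lemma Szero_le (R : realType) (V : lmodType R) (L : vector_lattice V)
  (X : Type) (S : X -> X -> X -> V) (a b c : X) :
  is_vector_Smetric L S -> vle L (S c c c) (S a a b).
Proof. by move=> hS; rewrite (Szero _ hS); case: hS. Qed.

Lemma Ssym (R : realType) (V : lmodType R) (L : vector_lattice V)
  (X : Type) (S : X -> X -> X -> V) (a b : X) :
  is_vector_Smetric L S -> vle L (S b b a) (S a a b).
Proof.
move=> hS; have := (proj2 (proj2 hS)) b b a b.
by rewrite (Szero _ hS) !add0r.
Qed.

Unset Implicit Arguments.
Theorem theorem2p3 (R : realType) (V : lmodType R) (L : vector_lattice V)
  (X : Type) (x0 : X) (S : X -> X -> X -> V) (H K P Q : X -> X) (rho : R) :
  is_vector_Smetric L S ->
  0 <= rho -> rho < 1 ->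
  (forall x y z,
     vle L (S (H x) (H y) (K z))
       (rho *: vmax4 L (S (P x) (P y) (Q z)) (S (P x) (P x) (H x))
                       (S (Q z) (Q z) (K z)) (S (Q z) (Q z) (H x)))) ->
  owc H P -> owc K Q ->
  exists! xi : X, H xi = xi /\ K xi = xi /\ P xi = xi /\ Q xi = xi.
Proof.
move=> hS r0 r1 hc [u [Hu HPu]] [v [Kv KQv]].
have refl : forall a b, vle L (S a a b) (S a a b) by move=> *; apply: vle_refl.
have e1 : H u = K v.
  have := hc u u v; rewrite -Hu -Kv => h.
  apply: (key hS r0 r1 _ _ _ _ h) => //;
    try exact: Szero_le hS; try exact: Ssym hS; try apply: refl; idtac.
have [w ew] : exists w, w = H u by exists (H u).
have Pw : P w = H w by rewrite ew [in RHS]Hu HPu.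
have Hw : H w = w.
  have := hc w w v; rewrite Pw -Kv -e1 -ew => h.
  apply: (key hS r0 r1 _ _ _ _ h) => //;
    try exact: Szero_le hS; try exact: Ssym hS; try apply: refl; idtac.
have Qw : Q w = K w by rewrite ew e1 [in RHS]Kv KQv.
have Kw : K w = w.
  have := hc w w w; rewrite Pw Qw Hw => h.
  apply/esym; apply: (key hS r0 r1 _ _ _ _ h) => //;
    try exact: Szero_le hS; try exact: Ssym hS; try apply: refl; idtac.
exists w; split; first by rewrite /= Pw Qw Hw Kw.
move=> z [Hz [Kz [Pz Qz]]].
have := hc w w z; rewrite Pw Hw Qz Kz => h.
apply: (key hS r0 r1 _ _ _ _ h) => //;
  try exact: Szero_le hS; try exact: Ssym hS; try apply: refl; idtac.
Qed.
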